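(* Let $S=(\mathcal{E},\Sigma,X,\mathcal{O})$ be an entity and $e\in\mathcal{E}$. Then $\mathcal{F}(e)=\{F\subseteq\Sigma:\exists A\subseteq O(e),\ F=eig_e(A)\}$ is a closure system on $\Sigma$, i.e. $\emptyset\in\mathcal{F}(e)$, $\Sigma\in\mathcal{F}(e)$, and $\mathcal{F}(e)$ is closed under arbitrary intersections.
   Context: An entity $S=(\mathcal{E},\Sigma,X,\mathcal{O})$ consists of sets $\mathcal{E},\Sigma$ and for each $e\in\mathcal{E},p\in\Sigma$ a nonempty set $O(e,p)$, with $X=\bigcup O(e,p)$; $O(e)=\bigcup_{p\in\Sigma}O(e,p)$. The eigen map $eig_e:\mathcal{P}(O(e))\to\mathcal{P}(\Sigma)$ is defined by $p\in eig_e(A)\iff O(e,p)\subseteq A$. *)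

(* Defs.v *)
From mathcomp Require Import all_boot.
From mathcomp Require Import boolp classical_sets.
Set Implicit Arguments. Unset Strict Implicit. Unset Printing Implicit Defensive.
Local Open Scope classical_set_scope.

Record entity := Entity {
  ent_E : Type;
  ent_Sigma : Type;
  ent_X : Type;
  ent_O : ent_E -> ent_Sigma -> set ent_X;
  ent_O_nonempty : forall e p, ent_O e p !=set0;
  ent_X_union : [set: ent_X] = \bigcup_(e in [set: ent_E]) \bigcup_(p in [set: ent_Sigma]) ent_O e p
}.

Definition Oe (S : entity) (e : ent_E S) : set (ent_X S) :=
  \bigcup_(p in [set: ent_Sigma S]) ent_O e p.

Definition eig (S : entity) (e : ent_E S) (A : set (ent_X S)) : set (ent_Sigma S) :=
  [set p | ent_O e p `<=` A].

Definition Fam (S : entity) (e : ent_E S) : set (set (ent_Sigma S)) :=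
  [set F | exists A : set (ent_X S), A `<=` Oe e /\ F = eig e A].

(* Main.v *)
Require Import Defs.
From mathcomp Require Import all_boot.
From mathcomp Require Import boolp classical_sets.
Local Open Scope classical_set_scope.

Theorem mainTheorem10 (S : entity) (e : ent_E S) :
  Fam e set0 /\ Fam e [set: ent_Sigma S] /\
  (forall C : set (set (ent_Sigma S)), C `<=` Fam e ->
     Fam e (\bigcap_(F in C) F)).
Proof.
split; [|split].
- exists set0; split; first by move=> x.
  apply/seteqP; split => p //=.
  move=> H; have [x Hx] := ent_O_nonempty e p; exact: (H x Hx).
- exists (Oe e); split; first by [].
  apply/seteqP; split => p //= _ x Hx; by exists p.
- move=> C HC.
  exists (\bigcup_(p in \bigcap_(F in C) F) ent_O e p); split.
    by move=> x [p _ Hx]; exists p.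
  apply/seteqP; split => p /=.
    by move=> Hp x Hx; exists p.
  move=> Hp F CF.
  have [B [_ EF]] := HC F CF.
  rewrite EF => x /Hp [q Hq Hx].
  have := Hq F CF; rewrite EF; exact.
Qed.
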